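(* Fix $\sigma^2>0$. Let $\mathcal S_C\subset\mathbb R$ be a finite constellation that is symmetric ($s\in\mathcal S_C\Rightarrow -s\in\mathcal S_C$), with points used with equal probability and unit average power. For $\delta>0$ let $\phi^{-1}_\delta(\rho)=1$ for $0\le\rho<\frac{\delta}{1+\sigma^2}$ and $\phi^{-1}_\delta(\rho)=\frac{\delta}{\rho}-\sigma^2$ for $\rho\ge\frac{\delta}{1+\sigma^2}$. Let $\psi^{opt}_{\mathcal S_C}(\rho)=\min\{\phi^{-1}_\delta(\rho),\mathrm{mmse}(\mathcal S_C,\rho)\}$ and $$a_{\mathcal S_C}(\delta)=\int_0^\infty\big(\phi^{-1}_\delta(\rho)-\psi^{opt}_{\mathcal S_C}(\rho)\big)\mathrm d\rho,\qquad R_{\mathrm{AC}}(\delta)=C_{\mathrm G}-\frac{a_{\mathcal S_C}(\delta)}{2\delta},$$ where $C_{\mathrm G}=\frac12\ln(1+1/\sigma^2)$. Then $R_{\mathrm{AC}}(\delta)\to C_{\mathrm G}$ as $\delta\to0$.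
   Context: $\mathrm{mmse}(\mathcal S,\rho)$ denotes the minimum mean-squared error of estimating $s$, drawn uniformly from $\mathcal S$, from the observation $\sqrt\rho\,s+w$ with $w\sim\mathcal N(0,1)$ independent of $s$. In the paper's interpretation $\delta\to0$ is taken jointly with the underlying code rate $R_{\mathrm C}=\delta R_{\mathrm{AC}}\to0$, and the decoder transfer curve is assumed to satisfy the matching condition $\psi=\psi^{opt}_{\mathcal S_C}$. *)

(* Defs.v *)
From Stdlib Require Import Reals Lra List ClassicalEpsilon.
Import ListNotations.
Open Scope R_scope.

Definition lsum (l : list R) : R := fold_right Rplus 0 l.

Definition is_integral_0_inf (f : R -> R) (l : R) : Prop :=
  (forall b, 0 <= b -> inhabited (Riemann_integrable f 0 b)) /\
  (forall eps, 0 < eps -> exists M, forall b (pr : Riemann_integrable f 0 b),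
       M <= b -> Rabs (RiemannInt pr - l) < eps).

Definition is_integral_R (f : R -> R) (l : R) : Prop :=
  (forall a b, inhabited (Riemann_integrable f a b)) /\
  (forall eps, 0 < eps -> exists M, forall a b (pr : Riemann_integrable f a b),
       a <= - M -> M <= b -> Rabs (RiemannInt pr - l) < eps).

Definition integral_0_inf (f : R -> R) : R :=
  epsilon (inhabits 0) (fun l => is_integral_0_inf f l).

Definition integral_R (f : R -> R) : R :=
  epsilon (inhabits 0) (fun l => is_integral_R f l).

Definition gauss (w : R) : R := exp (- (w ^ 2) / 2) / sqrt (2 * PI).

Definition constellation (S : list R) : Prop :=
  S <> [] /\ NoDup S /\ (forall s, In s S -> In (- s) S) /\
  lsum (map (fun s => s ^ 2) S) / INR (length S) = 1.

(* likelihood weight of point s given observation y = sqrt rho * s + w *)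
Definition lik (rho y s : R) : R := exp (- ((y - sqrt rho * s) ^ 2) / 2).

(* posterior mean E[s | y] for s uniform on S *)
Definition post_mean (S : list R) (rho y : R) : R :=
  lsum (map (fun s => s * lik rho y s) S) / lsum (map (lik rho y) S).

(* mmse(S, rho) = E[(s - E[s|y])^2], s uniform on S, w ~ N(0,1) *)
Definition mmse (S : list R) (rho : R) : R :=
  lsum (map (fun sj => integral_R (fun w =>
          (sj - post_mean S rho (sqrt rho * sj + w)) ^ 2 * gauss w)) S)
  / INR (length S).

Definition phi_inv (sigma2 delta rho : R) : R :=
  if Rlt_dec rho (delta / (1 + sigma2)) then 1 else delta / rho - sigma2.

Definition psi_opt (sigma2 : R) (S : list R) (delta rho : R) : R :=
  Rmin (phi_inv sigma2 delta rho) (mmse S rho).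

Definition a_S (sigma2 : R) (S : list R) (delta : R) : R :=
  integral_0_inf (fun rho => phi_inv sigma2 delta rho - psi_opt sigma2 S delta rho).

Definition C_G (sigma2 : R) : R := / 2 * ln (1 + / sigma2).

Definition R_AC (sigma2 : R) (S : list R) (delta : R) : R :=
  C_G sigma2 - a_S sigma2 S delta / (2 * delta).

(* Main.v *)
Require Import Defs.
From Stdlib Require Import Reals Lra List ClassicalEpsilon Permutation.
From Coquelicot Require Import Coquelicot.
Import ListNotations.
Open Scope R_scope.
From Stdlib Require Import FunctionalExtensionality Lia.
Definition isR (f : R -> R) (L : R) : Prop :=
  (forall a b, ex_RInt f a b) /\
  (forall eps, 0 < eps -> exists M, forall a b, a <= - M -> M <= b ->
     Rabs (RInt f a b - L) < eps).

Lemma isR_is_integral f L : isR f L -> is_integral_R f L.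
Proof.
intros [H1 H2]; split.
- intros a b; constructor; apply ex_RInt_Reals_0; apply H1.
- intros eps Heps; destruct (H2 eps Heps) as [M HM]; exists M.
  intros a b pr Ha Hb; rewrite <- RInt_Reals; apply HM; auto.
Qed.

Lemma is_integral_R_unique f L1 L2 :
  is_integral_R f L1 -> is_integral_R f L2 -> L1 = L2.
Proof.
intros [H1 H2] [_ H3].
destruct (Req_dec L1 L2) as [e|ne]; auto.
set (e := Rabs (L1 - L2) / 2).
assert (He : 0 < e) by (unfold e; assert (L1 - L2 <> 0) by lra; pose proof (Rabs_pos_lt _ H); lra).
destruct (H2 e He) as [M1 HM1]; destruct (H3 e He) as [M2 HM2].
set (M := Rmax (Rabs M1) (Rabs M2)).
assert (A1 : M1 <= M) by (unfold M; pose proof (Rle_abs M1); pose proof (Rmax_l (Rabs M1) (Rabs M2)); lra).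
assert (A2 : M2 <= M) by (unfold M; pose proof (Rle_abs M2); pose proof (Rmax_r (Rabs M1) (Rabs M2)); lra).
destruct (H1 (-M) M) as [pr].
specialize (HM1 (-M) M pr ltac:(lra) ltac:(lra)).
specialize (HM2 (-M) M pr ltac:(lra) ltac:(lra)).
exfalso. unfold e in *.
assert (Rabs (L1 - L2) <= Rabs (RiemannInt pr - L1) + Rabs (RiemannInt pr - L2)).
{ replace (L1 - L2) with (-(RiemannInt pr - L1) + (RiemannInt pr - L2)) by ring.
  eapply Rle_trans; [apply Rabs_triang|]. rewrite Rabs_Ropp; lra. }
lra.
Qed.

Lemma integral_R_eq f L : isR f L -> integral_R f = L.
Proof.
intro H. apply isR_is_integral in H.
unfold integral_R.
apply is_integral_R_unique with f; auto.
apply epsilon_spec. exists L; auto.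
Qed.
Lemma RInt_lin f g c a b : ex_RInt f a b -> ex_RInt g a b ->
  RInt (fun x => f x + c * g x) a b = RInt f a b + c * RInt g a b.
Proof.
intros Hf Hg.
change (RInt (fun x => plus (f x) (scal c (g x))) a b = plus (RInt f a b) (scal c (RInt g a b))).
rewrite (RInt_plus f (fun x => scal c (g x))); auto. rewrite (RInt_scal g); auto.
apply ex_RInt_scal; auto.
Qed.

Lemma ex_RInt_lin f g c a b : ex_RInt f a b -> ex_RInt g a b ->
  ex_RInt (fun x => f x + c * g x) a b.
Proof.
intros Hf Hg.
change (ex_RInt (fun x => plus (f x) (scal c (g x))) a b).
apply ex_RInt_plus; auto. apply ex_RInt_scal; auto.
Qed.

Lemma Chasles f a b c : ex_RInt f a b -> ex_RInt f b c ->
  RInt f a b + RInt f b c = RInt f a c.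
Proof. intros; exact (RInt_Chasles f a b c H H0). Qed.

Lemma RInt_ge0 f a b : a <= b -> ex_RInt f a b -> (forall x, a < x < b -> 0 <= f x) ->
  0 <= RInt f a b.
Proof.
intros Hab Hf Hp.
assert (H0 : RInt (fun _ => 0) a b = 0).
{ rewrite RInt_const. change ((b - a) * 0 = 0). ring. }
rewrite <- H0. apply RInt_le; auto. apply ex_RInt_const.
Qed.

Lemma RInt_mono_int f c a b d : (forall x y, ex_RInt f x y) -> (forall x, 0 <= f x) ->
  c <= a -> a <= b -> b <= d -> RInt f a b <= RInt f c d.
Proof.
intros He Hp H1 H2 H3.
rewrite <- (Chasles f c a d); auto. rewrite <- (Chasles f a b d); auto.
assert (0 <= RInt f c a) by (apply RInt_ge0; auto).
assert (0 <= RInt f b d) by (apply RInt_ge0; auto).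
lra.
Qed.

Lemma isR_le f L a b : isR f L -> (forall x, 0 <= f x) -> a <= b -> RInt f a b <= L.
Proof.
intros [He Hc] Hp Hab.
apply Rnot_lt_le; intro Hlt.
set (e := (RInt f a b - L) / 2).
destruct (Hc e ltac:(unfold e; lra)) as [M HM].
set (a' := Rmin a (-M)). set (b' := Rmax b M).
specialize (HM a' b' (Rmin_r _ _) (Rmax_r _ _)).
assert (RInt f a b <= RInt f a' b').
{ apply RInt_mono_int; auto. apply Rmin_l. apply Rmax_l. }
apply Rabs_def2 in HM. unfold e in *. lra.
Qed.

Lemma isR_ge0 f L : isR f L -> (forall x, 0 <= f x) -> 0 <= L.
Proof.
intros [He Hc] Hp.
apply Rnot_lt_le; intro Hlt.
destruct (Hc (-L) ltac:(lra)) as [M HM].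
specialize (HM (- Rabs M) (Rabs M) ltac:(pose proof (Rle_abs M); lra) ltac:(apply Rle_abs)).
assert (0 <= RInt f (- Rabs M) (Rabs M)).
{ apply RInt_ge0; auto. pose proof (Rabs_pos M); lra. }
apply Rabs_def2 in HM. lra.
Qed.

Lemma isR_lin f g c L1 L2 : isR f L1 -> isR g L2 ->
  isR (fun x => f x + c * g x) (L1 + c * L2).
Proof.
intros [Hf Hfc] [Hg Hgc]; split.
- intros; apply ex_RInt_lin; auto.
- intros eps Heps.
  set (e := eps / (2 * (1 + Rabs c))).
  assert (Hc0 := Rabs_pos c).
  assert (He : 0 < e) by (unfold e; apply Rdiv_lt_0_compat; lra).
  destruct (Hfc e He) as [M1 HM1]; destruct (Hgc e He) as [M2 HM2].
  exists (Rmax M1 M2). intros a b Ha Hb.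
  pose proof (Rmax_l M1 M2); pose proof (Rmax_r M1 M2).
  specialize (HM1 a b ltac:(lra) ltac:(lra)).
  specialize (HM2 a b ltac:(lra) ltac:(lra)).
  rewrite RInt_lin; auto.
  replace (RInt f a b + c * RInt g a b - (L1 + c * L2)) with
    ((RInt f a b - L1) + c * (RInt g a b - L2)) by ring.
  eapply Rle_lt_trans; [apply Rabs_triang|]. rewrite Rabs_mult.
  assert (Rabs c * Rabs (RInt g a b - L2) <= Rabs c * e) by
    (apply Rmult_le_compat_l; lra).
  assert (e * (2 * (1 + Rabs c)) = eps) by (unfold e; field; lra).
  nra.
Qed.

Lemma isR_mono f g L1 L2 : isR f L1 -> isR g L2 -> (forall x, f x <= g x) -> L1 <= L2.
Proof.
intros Hf Hg Hle.
assert (H := isR_lin g f (-1) L2 L1 Hg Hf).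
apply isR_ge0 in H. lra. intro x; specialize (Hle x); lra.
Qed.

Lemma isR_tail f h L Lh M : isR f L -> isR h Lh -> (forall x, 0 <= f x <= h x) -> 0 <= M ->
  0 <= L - RInt f (-M) M <= Lh - RInt h (-M) M.
Proof.
intros Hf Hh Hb HM. split.
- assert (RInt f (-M) M <= L) by (apply isR_le; [auto| intro x; apply Hb| lra]). lra.
- assert (H := isR_lin h f (-1) Lh L Hh Hf).
  apply isR_le with (a := -M) (b := M) in H; [| intro x; specialize (Hb x); lra| lra].
  rewrite RInt_lin in H; [lra| apply Hh| apply Hf].
Qed.

Lemma isR_exists (f : R -> R) B : (forall x, continuous f x) -> (forall x, 0 <= f x) ->
  (forall M, 0 <= M -> RInt f (-M) M <= B) -> exists L, isR f L.
Proof.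
intros Hc Hp HB.
assert (He : forall a b, ex_RInt f a b) by (intros; apply (ex_RInt_continuous (V:=R_CompleteNormedModule)); auto).
set (E := fun r => exists M, 0 <= M /\ r = RInt f (-M) M).
assert (Hb : bound E) by (exists B; intros r [M [HM ->]]; auto).
assert (Hn : exists x, E x) by (exists (RInt f (-0) 0); exists 0; split; auto; lra).
destruct (completeness E Hb Hn) as [L [HL1 HL2]].
exists L; split; auto.
intros eps Heps.
assert (exists M, 0 <= M /\ L - eps < RInt f (-M) M).
{ apply NNPP; intro Hno.
  assert (L <= L - eps); [|lra].
  apply HL2. intros r [M [HM ->]].
  apply Rnot_lt_le; intro Hlt; apply Hno; exists M; auto. }
destruct H as [M0 [HM0 Hlt]].
exists M0; intros a b Ha Hb'.
assert (RInt f (-M0) M0 <= RInt f a b) by (apply RInt_mono_int; auto; lra).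
set (N := Rmax (-a) b).
assert (RInt f a b <= RInt f (-N) N).
{ apply RInt_mono_int; auto; unfold N; pose proof (Rmax_l (-a) b); pose proof (Rmax_r (-a) b); lra. }
assert (RInt f (-N) N <= L).
{ apply HL1. exists N; split; auto. unfold N; pose proof (Rmax_r (-a) b); lra. }
apply Rabs_def1; lra.
Qed.

Lemma isR_dom (f h : R -> R) Lh : (forall x, continuous f x) -> (forall x, 0 <= f x <= h x) -> isR h Lh ->
  exists L, isR f L.
Proof.
intros Hc Hb Hh.
apply isR_exists with Lh; auto.
- intro x; apply Hb.
- intros M HM.
  assert (Hef : ex_RInt f (-M) M) by (apply (ex_RInt_continuous (V:=R_CompleteNormedModule)); auto).
  apply Rle_trans with (RInt h (-M) M).
  + apply RInt_le; auto; [lra| apply Hh| intros; apply Hb].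
  + apply isR_le; auto; [intro x; specialize (Hb x); lra| lra].
Qed.
Lemma lsum_perm l1 l2 : Permutation l1 l2 -> lsum l1 = lsum l2.
Proof. induction 1; simpl; try lra. Qed.

Lemma lsum_map_plus {A} (f g : A -> R) l :
  lsum (map (fun x => f x + g x) l) = lsum (map f l) + lsum (map g l).
Proof. induction l; simpl; lra. Qed.

Lemma lsum_map_scal {A} (f : A -> R) c l :
  lsum (map (fun x => c * f x) l) = c * lsum (map f l).
Proof. induction l; simpl; [ring| rewrite IHl; ring]. Qed.

Lemma lsum_map_const {A} c (l : list A) :
  lsum (map (fun _ => c) l) = INR (length l) * c.
Proof. induction l; simpl length; [simpl; ring| rewrite S_INR; simpl; rewrite IHl; ring]. Qed.

Lemma lsum_map_le {A} (f g : A -> R) l :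
  (forall x, In x l -> f x <= g x) -> lsum (map f l) <= lsum (map g l).
Proof.
induction l; simpl; intros H; [lra|].
pose proof (H a (or_introl eq_refl)). pose proof (IHl (fun x Hx => H x (or_intror Hx))). lra.
Qed.

Lemma lsum_map_abs {A} (f : A -> R) l :
  Rabs (lsum (map f l)) <= lsum (map (fun x => Rabs (f x)) l).
Proof.
induction l; simpl. rewrite Rabs_R0; lra.
eapply Rle_trans; [apply Rabs_triang|]. lra.
Qed.

Lemma lsum_map_ge0 {A} (f : A -> R) l : (forall x, 0 <= f x) -> 0 <= lsum (map f l).
Proof. intro H; induction l; simpl; [lra| pose proof (H a); lra]. Qed.

Lemma lsum_map_pos {A} (f : A -> R) l : l <> [] -> (forall x, 0 < f x) -> 0 < lsum (map f l).
Proof.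
intros Hn H; destruct l as [|a l]; [congruence|]. simpl.
pose proof (H a). pose proof (lsum_map_ge0 f l (fun x => Rlt_le _ _ (H x))). lra.
Qed.

Lemma In_le_lsum {A} (f : A -> R) l x : In x l -> (forall y, 0 <= f y) -> f x <= lsum (map f l).
Proof.
intros Hi Hp; induction l as [|a l IH]; simpl in *; [contradiction|].
destruct Hi as [<-|Hi].
- pose proof (lsum_map_ge0 f l Hp); lra.
- pose proof (IH Hi); pose proof (Hp a); lra.
Qed.

Lemma map_opp_perm S : NoDup S -> (forall s, In s S -> In (- s) S) -> Permutation S (map Ropp S).
Proof.
intros Hnd Hs. apply NoDup_Permutation; auto.
- apply FinFun.Injective_map_NoDup; auto. intros x y H; lra.
- intro x; rewrite in_map_iff; split.
  + intro Hx. exists (-x); split; [ring| auto].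
  + intros [y [<- Hy]]; auto.
Qed.

Lemma lsum_map_opp_sym S (f : R -> R) : NoDup S -> (forall s, In s S -> In (- s) S) ->
  lsum (map f S) = lsum (map (fun s => f (- s)) S).
Proof.
intros H1 H2. rewrite (lsum_perm _ _ (Permutation_map f (map_opp_perm S H1 H2))).
rewrite map_map. auto.
Qed.

Lemma exp_le_exp_R x y : x <= y -> exp x <= exp y.
Proof. intro H; destruct (Rle_lt_or_eq_dec _ _ H) as [h|<-]; [left; apply exp_increasing; auto| lra]. Qed.
Lemma sinh_ineq_pos x : 0 <= x -> exp x - exp (- x) <= x * (exp x + exp (- x)).
Proof.
intro Hx.
set (h := fun x => (1 + x) * exp (- x) - (1 - x) * exp x).
assert (h x >= h 0).
{ destruct (Req_dec x 0) as [->|Hne]; [lra|].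
  destruct (MVT_gen h 0 x (fun x => x * (exp x - exp (- x)))) as [c [Hc Heq]].
  - intros y _. unfold h. auto_derive; auto. ring.
  - intros y _. apply continuity_pt_filterlim. apply (ex_derive_continuous (K:=R_AbsRing) (V:=R_NormedModule)).
    unfold h; auto_derive; auto.
  - rewrite Rmin_left in Hc by lra. rewrite Rmax_right in Hc by lra.
    assert (0 <= c * (exp c - exp (- c))).
    { apply Rmult_le_pos; [lra|]. assert (exp (-c) <= exp c) by (apply exp_le_exp_R; lra). lra. }
    nra. }
unfold h in H. rewrite Ropp_0, exp_0 in H. lra.
Qed.

Lemma sinh_ineq x : Rabs (exp x - exp (- x)) <= Rabs x * (exp x + exp (- x)).
Proof.
destruct (Rle_dec 0 x).
- rewrite (Rabs_pos_eq x) by lra.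
  assert (exp (-x) <= exp x) by (apply exp_le_exp_R; lra).
  rewrite Rabs_pos_eq by lra. apply sinh_ineq_pos; auto.
- rewrite (Rabs_left x) by lra.
  assert (exp x <= exp (-x)) by (apply exp_le_exp_R; lra).
  rewrite Rabs_left1 by lra.
  pose proof (sinh_ineq_pos (-x) ltac:(lra)). rewrite Ropp_involutive in H0. lra.
Qed.
Definition Lk (t y s : R) := exp (- ((y - t * s) ^ 2) / 2).
Definition pm (S : list R) (t y : R) :=
  lsum (map (fun s => s * Lk t y s) S) / lsum (map (Lk t y) S).

Lemma post_mean_pm S rho y : post_mean S rho y = pm S (sqrt rho) y.
Proof. reflexivity. Qed.

Lemma Lk_pos t y s : 0 < Lk t y s.
Proof. apply exp_pos. Qed.

Lemma D_pos S t y : S <> [] -> 0 < lsum (map (Lk t y) S).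
Proof. intro; apply lsum_map_pos; auto. intro; apply Lk_pos. Qed.

Lemma pm_bound1 S K t y : S <> [] -> (forall s, In s S -> Rabs s <= K) -> Rabs (pm S t y) <= K.
Proof.
intros Hn HK. unfold pm.
pose proof (D_pos S t y Hn).
rewrite Rabs_div by (intro Habs; lra). rewrite (Rabs_pos_eq (lsum (map (Lk t y) S))) by lra.
apply Rle_div_l; auto.
eapply Rle_trans; [apply lsum_map_abs|].
rewrite <- lsum_map_scal. apply lsum_map_le. intros s Hs.
rewrite Rabs_mult, (Rabs_pos_eq (Lk t y s)) by (left; apply Lk_pos).
apply Rmult_le_compat_r; [left; apply Lk_pos| auto].
Qed.

Lemma Lk_split t y s : Lk t y s = exp (- (y ^ 2 + t ^ 2 * s ^ 2) / 2) * exp (t * s * y)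
  /\ Lk t y (- s) = exp (- (y ^ 2 + t ^ 2 * s ^ 2) / 2) * exp (- (t * s * y)).
Proof.
unfold Lk; split; rewrite <- exp_plus; f_equal; field.
Qed.

Lemma pm_bound2 S K t y : S <> [] -> NoDup S -> (forall s, In s S -> In (- s) S) ->
  (forall s, In s S -> Rabs s <= K) -> Rabs (pm S t y) <= K ^ 2 * Rabs t * Rabs y.
Proof.
intros Hn Hnd Hsym HK. unfold pm.
pose proof (D_pos S t y Hn) as HD.
set (D := lsum (map (Lk t y) S)) in *.
set (N := lsum (map (fun s => s * Lk t y s) S)).
assert (HN : N = / 2 * lsum (map (fun s => s * (Lk t y s - Lk t y (- s))) S)).
{ assert (N = lsum (map (fun s => - s * Lk t y (- s)) S)) by
    (unfold N; apply lsum_map_opp_sym; auto).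
  replace (map (fun s => s * (Lk t y s - Lk t y (- s))) S) with
    (map (fun s => s * Lk t y s + - s * Lk t y (- s)) S) by (apply map_ext; intro; ring).
  rewrite lsum_map_plus. fold N. lra. }
assert (HD2 : D = / 2 * lsum (map (fun s => Lk t y s + Lk t y (- s)) S)).
{ assert (D = lsum (map (fun s => Lk t y (- s)) S)) by
    (unfold D; apply lsum_map_opp_sym; auto).
  rewrite lsum_map_plus. fold D. lra. }
rewrite Rabs_div by (intro Habs; lra). rewrite (Rabs_pos_eq D) by lra.
apply Rle_div_l; auto.
rewrite HN, HD2. rewrite Rabs_mult, Rabs_pos_eq by lra.
assert (Rabs (lsum (map (fun s => s * (Lk t y s - Lk t y (- s))) S)) <=
  K ^ 2 * Rabs t * Rabs y * lsum (map (fun s => Lk t y s + Lk t y (- s)) S)); [|lra].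
eapply Rle_trans; [apply lsum_map_abs|].
rewrite <- lsum_map_scal. apply lsum_map_le. intros s Hs.
destruct (Lk_split t y s) as [E1 E2]. rewrite E1, E2.
set (E := exp (- (y ^ 2 + t ^ 2 * s ^ 2) / 2)).
assert (HE : 0 < E) by apply exp_pos.
set (x := t * s * y).
replace (s * (E * exp x - E * exp (- x))) with (s * E * (exp x - exp (- x))) by ring.
rewrite !Rabs_mult, (Rabs_pos_eq E) by lra.
pose proof (sinh_ineq x).
assert (Hx : Rabs s * Rabs x <= K ^ 2 * Rabs t * Rabs y).
{ unfold x. rewrite !Rabs_mult.
  pose proof (HK s Hs). pose proof (Rabs_pos s). pose proof (Rabs_pos t). pose proof (Rabs_pos y).
  assert (Rabs s * Rabs s <= K * K) by (apply Rmult_le_compat; lra).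
  assert (Rabs s * (Rabs t * Rabs s * Rabs y) = (Rabs s * Rabs s) * (Rabs t * Rabs y)) by ring.
  assert ((Rabs s * Rabs s) * (Rabs t * Rabs y) <= (K * K) * (Rabs t * Rabs y)) by
    (apply Rmult_le_compat_r; [apply Rmult_le_pos|]; lra).
  simpl. nra. }
pose proof (exp_pos x). pose proof (exp_pos (-x)). pose proof (Rabs_pos s).
assert (Rabs s * E * Rabs (exp x - exp (- x)) <= Rabs s * E * (Rabs x * (exp x + exp (- x)))).
{ apply Rmult_le_compat_l; [apply Rmult_le_pos|]; lra. }
assert (Rabs s * E * (Rabs x * (exp x + exp (- x))) = (Rabs s * Rabs x) * (E * exp x + E * exp (- x))) by ring.
assert ((Rabs s * Rabs x) * (E * exp x + E * exp (- x)) <= K ^ 2 * Rabs t * Rabs y * (E * exp x + E * exp (- x))).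
{ apply Rmult_le_compat_r; [|auto]. pose proof (Rmult_lt_0_compat _ _ HE (exp_pos x)).
  pose proof (Rmult_lt_0_compat _ _ HE (exp_pos (-x))). lra. }
lra.
Qed.
Definition eg (x : R) := exp (- (x ^ 2) / 2).
Definition Gg (x : R) := RInt eg 0 x.
Definition fH (u t : R) := exp (- (u ^ 2) * (1 + t ^ 2) / 2) / (1 + t ^ 2).
Definition Hg (x : R) := RInt (fun t => fH x t) 0 1.

Lemma eg_cont x : continuous eg x.
Proof. apply (ex_derive_continuous (K:=R_AbsRing) (V:=R_NormedModule)). unfold eg; auto_derive; auto. Qed.

Lemma ex_RInt_eg a b : ex_RInt eg a b.
Proof. apply (ex_RInt_continuous (V:=R_CompleteNormedModule)); intros; apply eg_cont. Qed.

Lemma Gg_derive x : is_derive Gg x (eg x).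
Proof.
apply (is_derive_RInt eg Gg 0 x).
- apply filter_forall; intro b. unfold Gg. apply (RInt_correct (V:=R_CompleteNormedModule)), ex_RInt_eg.
- apply eg_cont.
Qed.

Lemma one_plus_sq_pos t : 0 < 1 + t ^ 2.
Proof. pose proof (pow2_ge_0 t); lra. Qed.

Lemma fH_derive u t : is_derive (fun z => fH z t) u (- u * exp (- (u ^ 2) * (1 + t ^ 2) / 2)).
Proof.
unfold fH. pose proof (one_plus_sq_pos t).
auto_derive. lra. replace (u*(u*1)) with (u^2) by ring. replace (t*(t*1)) with (t^2) by ring. unfold Rdiv. field. lra.
Qed.

Ltac c2d := repeat (first [apply continuity_2d_pt_id1 | apply continuity_2d_pt_id2 |
  apply continuity_2d_pt_const | apply continuity_2d_pt_mult | apply continuity_2d_pt_plus |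
  apply continuity_2d_pt_minus | apply continuity_2d_pt_opp]).

Lemma exp_cont_pt x : continuity_pt exp x.
Proof. apply derivable_continuous_pt, derivable_pt_exp. Qed.

Lemma fH_cont u t : continuous (fH u) t.
Proof. apply (ex_derive_continuous (K:=R_AbsRing) (V:=R_NormedModule)). unfold fH; auto_derive.
pose proof (one_plus_sq_pos t); lra. Qed.

Lemma Hg_derive x : is_derive Hg x (- eg x * Gg x).
Proof.
assert (Hd : (fun u v => Derive (fun z => fH z v) u) = (fun u v => - u * exp (- (u * u) * (1 + v * v) * / 2))).
{ apply functional_extensionality; intro u; apply functional_extensionality; intro v.
  transitivity (- u * exp (- (u ^ 2) * (1 + v ^ 2) / 2)).
  apply is_derive_unique, fH_derive. f_equal. f_equal. field. }
assert (H := is_derive_RInt_param fH 0 1 x).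
unfold Hg.
replace (- eg x * Gg x) with (RInt (fun t => Derive (fun u => fH u t) x) 0 1).
- apply H.
  + apply filter_forall; intros y t _. eexists; apply fH_derive.
  + intros t _. rewrite Hd. c2d. apply continuity_1d_2d_pt_comp; [apply exp_cont_pt|]. c2d.
  + apply filter_forall; intros y. apply (ex_RInt_continuous (V:=R_CompleteNormedModule)).
    intros; apply fH_cont.
- transitivity (RInt (fun t => scal (- eg x) (scal x (eg (x * t + 0)))) 0 1).
  + apply RInt_ext; intros t _.
    change (Derive (fun u : R => fH u t) x = (- eg x) * (x * eg (x * t + 0))).
    transitivity (- x * exp (- (x ^ 2) * (1 + t ^ 2) / 2)).
    apply is_derive_unique, fH_derive. unfold eg.
    replace (- (x ^ 2) * (1 + t ^ 2) / 2) with (- (x ^ 2) / 2 + - ((x * t + 0) ^ 2) / 2) by field.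
    rewrite exp_plus. ring.
  + rewrite (RInt_scal (fun t => scal x (eg (x * t + 0)))).
    * assert (HH : RInt (fun t => x * eg (x * t + 0)) 0 1 = RInt eg (x*0+0) (x*1+0)) by
        (apply (RInt_comp_lin eg x 0 0 1), ex_RInt_eg).
      change (- eg x * RInt (fun t : R => x * eg (x * t + 0)) 0 1 = - eg x * Gg x).
      rewrite HH. unfold Gg. f_equal. f_equal; simpl; ring.
    * apply (ex_RInt_continuous (V:=R_CompleteNormedModule)). intros.
      apply (ex_derive_continuous (K:=R_AbsRing) (V:=R_NormedModule)). unfold eg. auto_derive; auto.
      apply (ex_derive_scal (fun y => y) x). apply ex_derive_id.
Qed.

Lemma Gg0 : Gg 0 = 0.
Proof. unfold Gg. apply (RInt_point (V:=R_CompleteNormedModule)). Qed.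

Lemma cont_of_derive f x l : is_derive f x l -> continuity_pt f x.
Proof.
intro H. apply continuity_pt_filterlim.
apply (ex_derive_continuous (K:=R_AbsRing) (V:=R_NormedModule)). exists l; auto.
Qed.

Lemma Hg0 : Hg 0 = PI / 4.
Proof.
unfold Hg.
transitivity (RInt (fun t => / (1 + t ^ 2)) 0 1).
- apply RInt_ext; intros t _. change (fH 0 t = / (1 + t ^ 2)). unfold fH.
  replace (- (0 ^ 2) * (1 + t ^ 2) / 2) with 0 by field. rewrite exp_0. unfold Rdiv; ring.
- apply is_RInt_unique.
  rewrite <- atan_1. replace (atan 1) with (minus (atan 1) (atan 0)).
  + apply (is_RInt_derive (V:=R_CompleteNormedModule)).
    * intros x _. apply is_derive_Reals. apply derivable_pt_lim_atan.
    * intros x _. apply (ex_derive_continuous (K:=R_AbsRing) (V:=R_NormedModule)).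
      auto_derive. pose proof (pow2_ge_0 x). simpl in *. nra.
  + rewrite atan_0. change (atan 1 - 0 = atan 1). ring.
Qed.

Lemma GH_const x : Gg x ^ 2 + 2 * Hg x = PI / 2.
Proof.
set (F := fun x => Gg x ^ 2 + 2 * Hg x).
assert (HF : forall y, is_derive F y 0).
{ intro y. unfold F.
  replace 0 with (2 * Gg y * eg y + 2 * (- eg y * Gg y)) by ring.
  apply (is_derive_plus (K:=R_AbsRing) (V:=R_NormedModule)).
  - replace (2 * Gg y * eg y) with (INR 2 * eg y * Gg y ^ Nat.pred 2) by (simpl; ring).
    apply (is_derive_pow Gg 2 y (eg y)), Gg_derive.
  - apply (is_derive_scal Hg y 2 (- eg y * Gg y)), Hg_derive. }
destruct (MVT_gen F 0 x (fun _ => 0)) as [c [_ Hc]].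
- intros; apply HF.
- intros; apply (cont_of_derive F _ 0), HF.
- unfold F in Hc. rewrite Gg0, Hg0 in Hc. unfold F. lra.
Qed.

Lemma Hg_bounds x : 0 <= Hg x <= eg x.
Proof.
unfold Hg.
assert (Hex : ex_RInt (fun t => fH x t) 0 1) by
  (apply (ex_RInt_continuous (V:=R_CompleteNormedModule)); intros; apply fH_cont).
split.
- apply RInt_ge0; auto; [lra|]. intros t _. unfold fH. pose proof (one_plus_sq_pos t).
  pose proof (exp_pos (- x ^ 2 * (1 + t ^ 2) / 2)). apply Rlt_le, Rdiv_lt_0_compat; lra.
- replace (eg x) with (RInt (fun _ => eg x) 0 1).
  + apply RInt_le; auto; [lra| apply ex_RInt_const|].
    intros t _. unfold fH, eg. pose proof (one_plus_sq_pos t). pose proof (pow2_ge_0 t). pose proof (pow2_ge_0 x).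
    assert (exp (- x ^ 2 * (1 + t ^ 2) / 2) <= exp (- x ^ 2 / 2)) by (apply exp_le_exp_R; nra).
    pose proof (exp_pos (- x ^ 2 * (1 + t ^ 2) / 2)).
    apply Rle_trans with (exp (- x ^ 2 * (1 + t ^ 2) / 2)); auto.
    unfold Rdiv. rewrite <- (Rmult_1_r (exp _)) at 2. apply Rmult_le_compat_l; [lra|].
    rewrite <- Rinv_1. apply Rinv_le_contravar; lra.
  + rewrite RInt_const. change ((1 - 0) * eg x = eg x). ring.
Qed.

Lemma eg_bound x : eg x <= / (1 + x ^ 2 / 2).
Proof.
unfold eg. pose proof (exp_ineq1_le (x ^ 2 / 2)). pose proof (pow2_ge_0 x).
replace (- x ^ 2 / 2) with (- (x ^ 2 / 2)) by field. rewrite exp_Ropp.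
apply Rinv_le_contravar; lra.
Qed.

Lemma eg_pos x : 0 < eg x.
Proof. apply exp_pos. Qed.

Lemma Gg_ge0 x : 0 <= x -> 0 <= Gg x.
Proof. intro; unfold Gg; apply RInt_ge0; auto; [apply ex_RInt_eg| intros; left; apply eg_pos]. Qed.

Definition cg := sqrt (PI / 2).
Lemma cg_pos : 0 < cg.
Proof. unfold cg; apply sqrt_lt_R0. pose proof PI_RGT_0; lra. Qed.
Lemma cg_sq : cg * cg = PI / 2.
Proof. unfold cg; apply sqrt_sqrt. pose proof PI_RGT_0; lra. Qed.

Lemma Gg_close x : 0 <= x -> Rabs (Gg x - cg) <= 2 / (cg * (1 + x ^ 2 / 2)).
Proof.
intro Hx.
pose proof (GH_const x) as HC. pose proof (Hg_bounds x). pose proof (eg_bound x).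
pose proof (Gg_ge0 x Hx). pose proof cg_pos. pose proof cg_sq. pose proof (pow2_ge_0 x).
assert (Hd : 0 < 1 + x ^ 2 / 2) by lra.
assert (Hprod : Rabs (Gg x - cg) * (Gg x + cg) <= 2 / (1 + x ^ 2 / 2)).
{ rewrite <- (Rabs_pos_eq (Gg x + cg)) by lra. rewrite <- Rabs_mult.
  replace ((Gg x - cg) * (Gg x + cg)) with (- (2 * Hg x)) by (simpl in HC; nra).
  rewrite Rabs_Ropp, Rabs_pos_eq by lra.
  assert (eg x <= / (1 + x^2/2)) by auto. unfold Rdiv. lra. }
assert (Rabs (Gg x - cg) * cg <= Rabs (Gg x - cg) * (Gg x + cg)).
{ apply Rmult_le_compat_l; [apply Rabs_pos| lra]. }
apply Rmult_le_reg_r with cg; auto.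
replace (2 / (cg * (1 + x ^ 2 / 2)) * cg) with (2 / (1 + x ^ 2 / 2)) by (field; lra).
lra.
Qed.

Lemma Gg_odd x : Gg (- x) = - Gg x.
Proof.
unfold Gg.
assert (HH : RInt (fun y => (-1) * eg ((-1) * y + 0)) 0 x = RInt eg ((-1)*0+0) ((-1)*x+0)) by
  (apply (RInt_comp_lin eg (-1) 0 0 x), ex_RInt_eg).
replace ((-1)*0+0) with 0 in HH by ring. replace ((-1)*x+0) with (-x) in HH by ring.
rewrite <- HH.
transitivity (RInt (fun y => scal (-1) (eg y)) 0 x).
- apply RInt_ext; intros y _. change ((-1) * eg ((-1) * y + 0) = (-1) * eg y).
  unfold eg. f_equal. f_equal. f_equal. ring.
- rewrite (RInt_scal eg). change ((-1) * RInt eg 0 x = - RInt eg 0 x). ring. apply ex_RInt_eg.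
Qed.

Lemma gauss_eq w : gauss w = / (2 * cg) * eg w.
Proof.
unfold gauss, eg.
assert (sqrt (2 * PI) = 2 * cg).
{ pose proof cg_pos. rewrite <- (sqrt_square (2 * cg)) by lra. f_equal.
  replace (2 * cg * (2 * cg)) with (4 * (cg * cg)) by ring. rewrite cg_sq. field. }
rewrite H. unfold Rdiv. ring.
Qed.

Lemma gauss_cont w : continuous gauss w.
Proof.
apply (ex_derive_continuous (K:=R_AbsRing) (V:=R_NormedModule)). unfold gauss. auto_derive.
pose proof cg_pos. assert (sqrt (2*PI) <> 0); [|auto].
apply Rgt_not_eq, sqrt_lt_R0. pose proof PI_RGT_0; lra.
Qed.

Lemma ex_RInt_gauss a b : ex_RInt gauss a b.
Proof. apply (ex_RInt_continuous (V:=R_CompleteNormedModule)); intros; apply gauss_cont. Qed.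

Lemma RInt_gauss a b : RInt gauss a b = / (2 * cg) * (Gg b + Gg (- a)).
Proof.
transitivity (RInt (fun w => scal (/ (2 * cg)) (eg w)) a b).
- apply RInt_ext; intros; apply gauss_eq.
- rewrite (RInt_scal eg) by apply ex_RInt_eg. change (/ (2 * cg) * RInt eg a b = / (2 * cg) * (Gg b + Gg (- a))).
  f_equal. rewrite Gg_odd. unfold Gg.
  assert (HC := Chasles eg 0 a b (ex_RInt_eg _ _) (ex_RInt_eg _ _)).
  change (@eq R (RInt eg a b) (RInt eg 0 b + - RInt eg 0 a)). lra.
Qed.

Lemma gauss_pos w : 0 < gauss w.
Proof. rewrite gauss_eq. pose proof cg_pos. pose proof (eg_pos w). apply Rmult_lt_0_compat; auto. apply Rinv_0_lt_compat; lra. Qed.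

Lemma isR_gauss : isR gauss 1.
Proof.
split; [apply ex_RInt_gauss|].
intros eps Heps.
pose proof cg_pos as Hc.
exists (1 + 4 / (cg * cg * eps)). intros a b Ha Hb.
set (M := 1 + 4 / (cg * cg * eps)) in *. assert (HMdef : M = 1 + 4 / (cg * cg * eps)) by reflexivity. clearbody M.
assert (HM1 : 4 / (cg * cg * eps) > 0) by (apply Rdiv_lt_0_compat; [lra| apply Rmult_lt_0_compat; nra]).
rewrite RInt_gauss.
pose proof (Gg_close b ltac:(lra)). pose proof (Gg_close (- a) ltac:(lra)).
assert (Hbd : forall x, M <= x -> 2 / (cg * (1 + x ^ 2 / 2)) <= 2 / (cg * (1 + M ^ 2 / 2))).
{ intros x Hx. unfold Rdiv. apply Rmult_le_compat_l; [lra|]. apply Rinv_le_contravar.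
  - apply Rmult_lt_0_compat; auto. pose proof (pow2_ge_0 M); lra.
  - apply Rmult_le_compat_l; [lra|]. assert (M ^ 2 <= x ^ 2) by (simpl; nra). lra. }
pose proof (Hbd b Hb). pose proof (Hbd (-a) ltac:(lra)).
replace (/ (2 * cg) * (Gg b + Gg (- a)) - 1) with (/ (2 * cg) * ((Gg b - cg) + (Gg (- a) - cg))) by (field; lra).
rewrite Rabs_mult, Rabs_pos_eq by (left; apply Rinv_0_lt_compat; lra).
assert (Rabs (Gg b - cg + (Gg (- a) - cg)) <= 2 * (2 / (cg * (1 + M ^ 2 / 2)))).
{ eapply Rle_trans; [apply Rabs_triang| lra]. }
assert (Hfin : / (2 * cg) * (2 * (2 / (cg * (1 + M ^ 2 / 2)))) < eps).
{ replace (/ (2 * cg) * (2 * (2 / (cg * (1 + M ^ 2 / 2))))) with (2 / (cg * cg * (1 + M ^ 2 / 2)))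
    by (field; split; [pose proof (pow2_ge_0 M); lra| lra]).
  assert (HMM : M ^ 2 >= 4 / (cg * cg * eps)) by (simpl; nra).
  assert (Hpos: 0 < cg * cg) by nra.
  apply (Rmult_lt_reg_r (cg * cg * (1 + M ^ 2 / 2))). nra.
  replace (2 / (cg * cg * (1 + M ^ 2 / 2)) * (cg * cg * (1 + M ^ 2 / 2))) with 2 by (field; split; nra).
  assert (4 / (cg * cg * eps) * (cg * cg * eps) = 4) by (field; split; nra).
  nra. }
assert (0 < / (2 * cg)) by (apply Rinv_0_lt_compat; lra).
apply Rle_lt_trans with (/ (2 * cg) * (2 * (2 / (cg * (1 + M ^ 2 / 2))))); auto.
apply Rmult_le_compat_l; lra.
Qed.

Lemma gauss_derive x : is_derive gauss x (- x * gauss x).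
Proof.
unfold gauss. assert (sqrt (2*PI) <> 0).
{ apply Rgt_not_eq, sqrt_lt_R0. pose proof PI_RGT_0; lra. }
auto_derive; auto. replace (x * (x * 1)) with (x ^ 2) by ring. unfold Rdiv. field. auto.
Qed.

Lemma Rmult_cont (f g : R -> R) x : continuous f x -> continuous g x -> continuous (fun y => f y * g y) x.
Proof. intros; apply (continuous_mult f g); auto. Qed.

Definition ag (w : R) := Rabs w * gauss w.

Lemma ag_cont w : continuous ag w.
Proof. apply Rmult_cont; [apply continuous_Rabs| apply gauss_cont]. Qed.

Lemma ag_ge0 w : 0 <= ag w.
Proof. unfold ag; apply Rmult_le_pos; [apply Rabs_pos| left; apply gauss_pos]. Qed.

Lemma ex_RInt_ag a b : ex_RInt ag a b.
Proof. apply (ex_RInt_continuous (V:=R_CompleteNormedModule)); intros; apply ag_cont. Qed.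

Lemma isR_ag : exists c1, isR ag c1.
Proof.
apply isR_exists with (2 * gauss 0); [apply ag_cont| apply ag_ge0|].
intros M HM.
rewrite <- (Chasles ag (-M) 0 M) by apply ex_RInt_ag.
assert (H1 : RInt ag 0 M = gauss 0 - gauss M).
{ transitivity (RInt (fun w => w * gauss w) 0 M).
  - apply RInt_ext; intros x Hx. rewrite Rmin_left, Rmax_right in Hx by lra.
    unfold ag; rewrite Rabs_pos_eq by lra; auto.
  - apply is_RInt_unique.
    replace (gauss 0 - gauss M) with (minus (opp (gauss M)) (opp (gauss 0))).
    + apply (is_RInt_derive (V:=R_CompleteNormedModule) (fun w => opp (gauss w))).
      * intros x _. replace (x * gauss x) with (opp (- x * gauss x)).
        apply (is_derive_opp (K:=R_AbsRing) (V:=R_NormedModule)), gauss_derive.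
        change (- (- x * gauss x) = x * gauss x). ring.
      * intros x _. apply Rmult_cont; [apply continuous_id| apply gauss_cont].
    + change (- gauss M - - gauss 0 = gauss 0 - gauss M). ring. }
assert (H2 : RInt ag (-M) 0 = gauss 0 - gauss (-M)).
{ transitivity (RInt (fun w => - w * gauss w) (-M) 0).
  - apply RInt_ext; intros x Hx. rewrite Rmin_left, Rmax_right in Hx by lra.
    unfold ag; rewrite Rabs_left by lra; auto.
  - apply is_RInt_unique.
    replace (gauss 0 - gauss (-M)) with (minus (gauss 0) (gauss (-M))) by reflexivity.
    apply (is_RInt_derive (V:=R_CompleteNormedModule) gauss).
    * intros x _. apply gauss_derive.
    * intros x _. apply Rmult_cont; [| apply gauss_cont].
      apply (ex_derive_continuous (K:=R_AbsRing) (V:=R_NormedModule) (fun y => - y)). auto_derive; auto. }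
rewrite H1, H2. pose proof (gauss_pos M). pose proof (gauss_pos (-M)). lra.
Qed.

Lemma cont_pt_of_eps f x0 : (forall eps, 0 < eps -> exists d, 0 < d /\ forall x, Rabs (x - x0) < d -> Rabs (f x - f x0) < eps) -> continuity_pt f x0.
Proof.
intros H eps He. destruct (H eps He) as [d [Hd Hx]]. exists d; split; auto.
intros x [_ Hdx]. apply Hx. exact Hdx.
Qed.

Lemma c2d_pow f n x y : continuity_2d_pt f x y -> continuity_2d_pt (fun u v => f u v ^ n) x y.
Proof.
intro H; induction n.
- apply (continuity_2d_pt_ext (fun _ _ => 1)); [intros; simpl; auto| apply continuity_2d_pt_const].
- apply (continuity_2d_pt_ext (fun u v => f u v * f u v ^ n)); [intros; simpl; auto|].
  apply continuity_2d_pt_mult; auto.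
Qed.

Lemma c2d_lsum (g : R -> R -> R -> R) l x y :
  (forall s, continuity_2d_pt (g s) x y) ->
  continuity_2d_pt (fun u v => lsum (map (fun s => g s u v) l)) x y.
Proof.
intro H; induction l as [|a l IH].
- apply (continuity_2d_pt_ext (fun _ _ => 0)); [intros; simpl; auto| apply continuity_2d_pt_const].
- apply (continuity_2d_pt_ext (fun u v => g a u v + lsum (map (fun s => g s u v) l))); [intros; simpl; auto|].
  apply continuity_2d_pt_plus; auto.
Qed.

Definition Phi (S : list R) (sj t w : R) := (sj - pm S t (t * sj + w)) ^ 2 * gauss w.

Lemma Lk_c2d sj s x y : continuity_2d_pt (fun u v => Lk u (u * sj + v) s) x y.
Proof.
unfold Lk. apply continuity_1d_2d_pt_comp; [apply exp_cont_pt|].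
apply (continuity_2d_pt_ext (fun u v => - ((u * sj + v - u * s) ^ 2) * / 2)); [intros; unfold Rdiv; auto|].
apply continuity_2d_pt_mult; [| apply continuity_2d_pt_const].
apply continuity_2d_pt_opp. apply c2d_pow. c2d.
Qed.

Lemma gauss_cont_pt w : continuity_pt gauss w.
Proof. apply continuity_pt_filterlim, gauss_cont. Qed.

Lemma Phi_c2d S sj x y : S <> [] -> continuity_2d_pt (Phi S sj) x y.
Proof.
intro Hn. unfold Phi.
apply continuity_2d_pt_mult.
- apply c2d_pow. apply continuity_2d_pt_minus; [apply continuity_2d_pt_const|].
  unfold pm. apply (continuity_2d_pt_ext (fun u v =>
     lsum (map (fun s => (fun s u v => s * Lk u (u * sj + v) s) s u v) S) *
     / lsum (map (fun s => (fun s u v => Lk u (u * sj + v) s) s u v) S))); [intros; unfold Rdiv; auto|].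
  apply continuity_2d_pt_mult.
  + apply c2d_lsum. intro s. apply continuity_2d_pt_mult; [apply continuity_2d_pt_const| apply Lk_c2d].
  + apply continuity_2d_pt_inv.
    * apply c2d_lsum. intro s. apply Lk_c2d.
    * apply Rgt_not_eq. apply (D_pos S x (x * sj + y)); auto.
- apply (continuity_1d_2d_pt_comp gauss (fun u v => v)); [apply gauss_cont_pt| apply continuity_2d_pt_id2].
Qed.

Lemma Phi_cont S sj t w : S <> [] -> continuous (Phi S sj t) w.
Proof.
intro Hn. apply continuity_pt_filterlim. apply cont_pt_of_eps. intros eps He.
destruct (Phi_c2d S sj t w Hn (mkposreal eps He)) as [d Hd].
exists d; split; [apply cond_pos|]. intros x Hx. apply Hd; auto.
rewrite Rminus_eq_0, Rabs_R0. apply cond_pos.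
Qed.

Lemma Phi_bound S K sj t w : S <> [] -> (forall s, In s S -> Rabs s <= K) -> Rabs sj <= K ->
  0 <= Phi S sj t w <= 4 * K ^ 2 * gauss w.
Proof.
intros Hn HK Hj. unfold Phi.
pose proof (pm_bound1 S K t (t * sj + w) Hn HK). pose proof (gauss_pos w).
set (p := pm S t (t * sj + w)) in *.
split.
- apply Rmult_le_pos; [apply pow2_ge_0| lra].
- apply Rmult_le_compat_r; [lra|].
  assert (Rabs (sj - p) <= 2 * K) by (unfold Rminus; eapply Rle_trans; [apply Rabs_triang| rewrite Rabs_Ropp; lra]).
  assert (HK0 : 0 <= K) by (pose proof (Rabs_pos sj); lra).
  destruct (Rcase_abs (sj - p)) as [Hl|Hr].
  + rewrite Rabs_left in H1 by lra. simpl. nra.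
  + rewrite Rabs_right in H1 by lra. simpl. nra.
Qed.

Lemma isR_ext f g L : (forall x, f x = g x) -> isR f L -> isR g L.
Proof. intros H; replace g with f; auto. apply functional_extensionality; auto. Qed.

Lemma isR_zero : isR (fun _ => 0) 0.
Proof.
split; [intros; apply ex_RInt_const|].
intros eps He; exists 0; intros a b _ _. rewrite RInt_const.
change (Rabs ((b - a) * 0 - 0) < eps). rewrite Rmult_0_r, Rminus_0_r, Rabs_R0; auto.
Qed.

Lemma isR_scal f c L : isR f L -> isR (fun x => c * f x) (c * L).
Proof.
intro H. assert (H2 := isR_lin _ _ c _ _ isR_zero H).
eapply isR_ext; [| replace (c * L) with (0 + c * L) by ring; exact H2]. intro; simpl; ring.
Qed.

Definition J (S : list R) (sj t : R) := integral_R (Phi S sj t).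

Lemma J_isR S K sj t : S <> [] -> (forall s, In s S -> Rabs s <= K) -> Rabs sj <= K ->
  isR (Phi S sj t) (J S sj t).
Proof.
intros Hn HK Hj.
assert (Hh := isR_scal gauss (4 * K ^ 2) 1 isR_gauss).
destruct (isR_dom (Phi S sj t) (fun w => 4 * K ^ 2 * gauss w) (4 * K ^ 2 * 1)) as [L HL]; auto.
- intro; apply Phi_cont; auto.
- intro; apply Phi_bound; auto.
- unfold J. rewrite (integral_R_eq _ L HL). auto.
Qed.

Lemma J_cont S K sj t0 : S <> [] -> (forall s, In s S -> Rabs s <= K) -> Rabs sj <= K ->
  continuity_pt (J S sj) t0.
Proof.
intros Hn HK Hj. apply cont_pt_of_eps. intros eps He.
assert (HK0 : 0 <= K) by (pose proof (Rabs_pos sj); lra).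
set (C := 4 * K ^ 2).
assert (HC : 0 <= C) by (unfold C; pose proof (pow2_ge_0 K); lra).
destruct (proj2 isR_gauss (eps / (3 * (C + 1)))) as [M0 HM0].
{ apply Rdiv_lt_0_compat; lra. }
set (M := Rabs M0).
assert (HM : 0 <= M) by apply Rabs_pos.
assert (Hg : 1 - RInt gauss (- M) M < eps / (3 * (C + 1))).
{ specialize (HM0 (-M) M ltac:(unfold M; pose proof (Rle_abs M0); lra) ltac:(apply Rle_abs)).
  apply Rabs_def2 in HM0. lra. }
assert (Htail : forall t, Rabs (J S sj t - RInt (Phi S sj t) (- M) M) < eps / 3).
{ intro t.
  assert (Hh := isR_scal gauss C 1 isR_gauss).
  destruct (isR_tail (Phi S sj t) (fun w => C * gauss w) (J S sj t) (C * 1) M) as [T1 T2]; auto.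
  - apply J_isR with K; auto.
  - intro; apply Phi_bound; auto.
  - assert (Hs : RInt (fun w => C * gauss w) (- M) M = C * RInt gauss (- M) M) by
      exact (RInt_scal gauss (- M) M C (ex_RInt_gauss _ _)).
    rewrite Hs in T2.
    rewrite Rabs_pos_eq by lra.
    assert (C * (1 - RInt gauss (- M) M) <= C * (eps / (3 * (C + 1)))) by
      (apply Rmult_le_compat_l; lra).
    assert (C * (eps / (3 * (C + 1))) < eps / 3).
    { apply (Rmult_lt_reg_r (3 * (C + 1))); [lra|].
      replace (C * (eps / (3 * (C + 1))) * (3 * (C + 1))) with (C * eps) by (field; lra).
      replace (eps / 3 * (3 * (C + 1))) with (C * eps + eps) by field. lra. }
    lra. }
set (eta := eps / (3 * (2 * M + 1))).
assert (Heta : 0 < eta) by (unfold eta; apply Rdiv_lt_0_compat; lra).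
destruct (uniform_continuity_2d (Phi S sj) (t0 - 1) (t0 + 1) (- M) M
  (fun x y _ _ => Phi_c2d S sj x y Hn) (mkposreal eta Heta)) as [d Hd].
exists (Rmin 1 d). split; [apply Rmin_pos; [lra| apply cond_pos]|].
intros t Ht.
assert (Ht1 : Rabs (t - t0) < 1) by (eapply Rlt_le_trans; [exact Ht| apply Rmin_l]).
assert (Htd : Rabs (t - t0) < d) by (eapply Rlt_le_trans; [exact Ht| apply Rmin_r]).
assert (Hdiff : Rabs (RInt (Phi S sj t) (- M) M - RInt (Phi S sj t0) (- M) M) <= (M - - M) * eta).
{ assert (Hex : forall t, ex_RInt (Phi S sj t) (- M) M) by
    (intro; apply (ex_RInt_continuous (V:=R_CompleteNormedModule)); intros; apply Phi_cont; auto).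
  replace (RInt (Phi S sj t) (- M) M - RInt (Phi S sj t0) (- M) M) with
    (RInt (fun w => Phi S sj t w + -1 * Phi S sj t0 w) (- M) M) by (rewrite (RInt_lin (Phi S sj t) (Phi S sj t0) (-1) (-M) M (Hex t) (Hex t0)); change (@eq R (RInt (Phi S sj t) (- M) M + -1 * RInt (Phi S sj t0) (- M) M) (RInt (Phi S sj t) (- M) M - RInt (Phi S sj t0) (- M) M)); ring).
  apply abs_RInt_le_const; [lra| apply ex_RInt_lin; auto|].
  intros w Hw. left.
  replace (Phi S sj t w + -1 * Phi S sj t0 w) with (Phi S sj t w - Phi S sj t0 w) by ring.
  apply (Hd t0 w t w).
  - lra.
  - lra.
  - apply Rabs_def2 in Ht1. lra.
  - lra.
  - auto.
  - rewrite Rminus_eq_0, Rabs_R0. apply cond_pos. }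
assert ((M - - M) * eta < eps / 3).
{ unfold eta. apply (Rmult_lt_reg_r (3 * (2 * M + 1))); [lra|].
  replace ((M - - M) * (eps / (3 * (2 * M + 1))) * (3 * (2 * M + 1))) with (2 * M * eps) by (field; lra).
  replace (eps / 3 * (3 * (2 * M + 1))) with (2 * M * eps + eps) by field. lra. }
pose proof (Htail t). pose proof (Htail t0).
replace (J S sj t - J S sj t0) with ((J S sj t - RInt (Phi S sj t) (- M) M)
  + (RInt (Phi S sj t) (- M) M - RInt (Phi S sj t0) (- M) M)
  - (J S sj t0 - RInt (Phi S sj t0) (- M) M)) by ring.
eapply Rle_lt_trans; [apply Rabs_triang|].
eapply Rle_lt_trans; [apply Rplus_le_compat_r; apply Rabs_triang|].
rewrite Rabs_Ropp. lra.
Qed.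

Lemma J_lower S K sj t c1 : S <> [] -> NoDup S -> (forall s, In s S -> In (- s) S) ->
  (forall s, In s S -> Rabs s <= K) -> Rabs sj <= K -> isR ag c1 -> 0 <= t ->
  sj ^ 2 - 2 * K ^ 3 * t * (t * K + c1) <= J S sj t.
Proof.
intros Hn Hnd Hsym HK Hj Hc1 Ht.
assert (HK0 : 0 <= K) by (pose proof (Rabs_pos sj); lra).
assert (H1 := isR_scal gauss (t * K) 1 isR_gauss).
assert (H2 := isR_lin _ _ 1 _ _ H1 Hc1).
assert (H3 := isR_scal gauss (sj ^ 2) 1 isR_gauss).
assert (H4 := isR_lin _ _ (- 2 * K ^ 3 * t) _ _ H3 H2).
replace (sj ^ 2 - 2 * K ^ 3 * t * (t * K + c1)) with (sj ^ 2 * 1 + - 2 * K ^ 3 * t * (t * K * 1 + 1 * c1)) by ring.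
apply (isR_mono _ _ _ _ H4 (J_isR S K sj t Hn HK Hj)).
intro w. unfold Phi, ag.
pose proof (gauss_pos w).
pose proof (pm_bound2 S K t (t * sj + w) Hn Hnd Hsym HK).
set (p := pm S t (t * sj + w)) in *.
assert (Hy : Rabs (t * sj + w) <= t * K + Rabs w).
{ eapply Rle_trans; [apply Rabs_triang|]. rewrite Rabs_mult, (Rabs_pos_eq t) by lra.
  pose proof (Rmult_le_compat_l t _ _ Ht Hj). lra. }
assert (Hp : Rabs p <= K ^ 2 * t * (t * K + Rabs w)).
{ rewrite (Rabs_pos_eq t) in H0 by lra. eapply Rle_trans; [exact H0|].
  apply Rmult_le_compat_l; auto. apply Rmult_le_pos; [apply pow2_ge_0| lra]. }
assert (Hsp : sj ^ 2 - 2 * K ^ 3 * t * (t * K + Rabs w) <= (sj - p) ^ 2).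
{ assert (Rabs (sj * p) <= K * (K ^ 2 * t * (t * K + Rabs w))).
  { rewrite Rabs_mult. apply Rmult_le_compat; auto; apply Rabs_pos. }
  assert (sj * p <= Rabs (sj * p)) by apply Rle_abs.
  assert (E1: (sj - p)^2 = sj^2 - 2*(sj*p) + p^2) by ring.
  assert (E2: 2 * K ^ 3 * t * (t * K + Rabs w) = 2 * (K * (K ^ 2 * t * (t * K + Rabs w)))) by ring.
  rewrite E1, E2. pose proof (pow2_ge_0 p). lra. }
assert (Hfin : (sj ^ 2 - 2 * K ^ 3 * t * (t * K + Rabs w)) * gauss w <= (sj - p) ^ 2 * gauss w)
  by (apply Rmult_le_compat_r; [left; apply gauss_pos| exact Hsp]).
replace (sj ^ 2 * gauss w + - 2 * K ^ 3 * t * (t * K * gauss w + 1 * (Rabs w * gauss w)))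
  with ((sj ^ 2 - 2 * K ^ 3 * t * (t * K + Rabs w)) * gauss w) by ring.
exact Hfin.
Qed.

Lemma cont_eps f x : continuity_pt f x -> forall eps, 0 < eps ->
  exists d, 0 < d /\ forall y, Rabs (y - x) < d -> Rabs (f y - f x) < eps.
Proof.
intros H eps He. destruct (H eps He) as [d [Hd Hy]]. exists d; split; auto.
intros y Hyx. destruct (Req_dec y x) as [->|Hne].
- rewrite Rminus_eq_0, Rabs_R0; auto.
- apply (Hy y). split; [split; [exact I| auto]| exact Hyx].
Qed.

Lemma cont_comb2 (h : R -> R -> R) f g x :
  (forall a b c d, Rabs (h a b - h c d) <= 2 * (Rabs (a - c) + Rabs (b - d))) ->
  continuity_pt f x -> continuity_pt g x -> continuity_pt (fun y => h (f y) (g y)) x.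
Proof.
intros Hh Hf Hg. apply cont_pt_of_eps. intros eps He.
destruct (cont_eps f x Hf (eps / 4) ltac:(lra)) as [d1 [Hd1 H1]].
destruct (cont_eps g x Hg (eps / 4) ltac:(lra)) as [d2 [Hd2 H2]].
exists (Rmin d1 d2); split; [apply Rmin_pos; auto|].
intros y Hy.
pose proof (H1 y (Rlt_le_trans _ _ _ Hy (Rmin_l _ _))).
pose proof (H2 y (Rlt_le_trans _ _ _ Hy (Rmin_r _ _))).
eapply Rle_lt_trans; [apply Hh| lra].
Qed.

Lemma Rmin_lip a b c d : Rabs (Rmin a b - Rmin c d) <= 2 * (Rabs (a - c) + Rabs (b - d)).
Proof.
pose proof (Rabs_pos (a - c)); pose proof (Rabs_pos (b - d)).
unfold Rmin; destruct (Rle_dec a b), (Rle_dec c d);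
  repeat match goal with |- context [Rabs ?z] => destruct (Rcase_abs z); [rewrite (Rabs_left z) by lra| rewrite (Rabs_right z) by lra] end; lra.
Qed.

Lemma Rmax_lip a b c d : Rabs (Rmax a b - Rmax c d) <= 2 * (Rabs (a - c) + Rabs (b - d)).
Proof.
unfold Rmax; destruct (Rle_dec a b), (Rle_dec c d);
  repeat match goal with |- context [Rabs ?z] => destruct (Rcase_abs z); [rewrite (Rabs_left z) by lra| rewrite (Rabs_right z) by lra] end; lra.
Qed.

Lemma sqrt_cont_all x : continuity_pt sqrt x.
Proof.
destruct (Rle_dec 0 x) as [H|H]; [apply continuity_pt_sqrt; auto|].
apply cont_pt_of_eps. intros eps He. exists (- x); split; [lra|].
intros y Hy. apply Rabs_def2 in Hy. rewrite !sqrt_neg_0 by lra. rewrite Rminus_eq_0, Rabs_R0; auto.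
Qed.

Lemma cont_lsum (g : R -> R -> R) l x : (forall s, In s l -> continuity_pt (g s) x) ->
  continuity_pt (fun y => lsum (map (fun s => g s y) l)) x.
Proof.
induction l as [|a l IH]; intro H.
- apply continuity_pt_const. intros u v; reflexivity.
- apply (continuity_pt_ext (fun y => g a y + lsum (map (fun s => g s y) l))); [intros; simpl; auto|].
  apply (continuity_pt_plus (g a) (fun y => lsum (map (fun s => g s y) l))).
  + apply H; simpl; auto.
  + apply IH. intros; apply H; simpl; auto.
Qed.

Lemma mmse_eq S rho : mmse S rho = lsum (map (fun sj => J S sj (sqrt rho)) S) / INR (length S).
Proof. reflexivity. Qed.

Lemma phi_inv_eq sigma2 delta rho : 0 < sigma2 -> 0 < delta ->
  phi_inv sigma2 delta rho = Rmin 1 (delta / Rmax rho (delta / (1 + sigma2)) - sigma2).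
Proof.
intros Hs Hd. unfold phi_inv.
set (r0 := delta / (1 + sigma2)).
assert (Hr0 : 0 < r0) by (unfold r0; apply Rdiv_lt_0_compat; lra).
assert (Hdr : delta / r0 - sigma2 = 1) by (unfold r0; field; lra).
destruct (Rlt_dec rho r0).
- rewrite Rmax_right by lra. rewrite Hdr. unfold Rmin; destruct (Rle_dec 1 1); lra.
- rewrite Rmax_left by lra.
  assert (delta / rho <= delta / r0).
  { unfold Rdiv. apply Rmult_le_compat_l; [lra|]. apply Rinv_le_contravar; lra. }
  unfold Rmin; destruct (Rle_dec 1 (delta / rho - sigma2)); lra.
Qed.

Lemma phi_inv_cont sigma2 delta x : 0 < sigma2 -> 0 < delta -> continuity_pt (phi_inv sigma2 delta) x.
Proof.
intros Hs Hd.
apply (continuity_pt_ext (fun rho => Rmin 1 (delta / Rmax rho (delta / (1 + sigma2)) - sigma2)));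
  [intros; rewrite phi_inv_eq; auto|].
set (r0 := delta / (1 + sigma2)).
assert (Hr0 : 0 < r0) by (unfold r0; apply Rdiv_lt_0_compat; lra).
apply (cont_comb2 Rmin (fun _ => 1) (fun rho => delta / Rmax rho r0 - sigma2)).
- apply Rmin_lip.
- apply continuity_pt_const; intros u v; reflexivity.
- assert (Hm : continuity_pt (fun rho => Rmax rho r0) x).
  { apply (cont_comb2 Rmax (fun y => y) (fun _ => r0)); [apply Rmax_lip| apply continuity_pt_id|
      apply continuity_pt_const; intros u v; reflexivity]. }
  apply (continuity_pt_ext (fun rho => (fct_cte delta rho / Rmax rho r0) - fct_cte sigma2 rho));
    [intros; unfold fct_cte; auto|].
  apply (continuity_pt_minus (fun rho => fct_cte delta rho / Rmax rho r0) (fct_cte sigma2)).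
  + apply (continuity_pt_div (fct_cte delta) (fun rho => Rmax rho r0)); auto.
    * apply continuity_pt_const; intros u v; reflexivity.
    * pose proof (Rmax_r x r0); lra.
  + apply continuity_pt_const; intros u v; reflexivity.
Qed.

Lemma is_integral_0_inf_unique f L1 L2 :
  is_integral_0_inf f L1 -> is_integral_0_inf f L2 -> L1 = L2.
Proof.
intros [H1 H2] [_ H3].
destruct (Req_dec L1 L2) as [e|ne]; auto.
set (e := Rabs (L1 - L2) / 2).
assert (He : 0 < e) by (unfold e; assert (L1 - L2 <> 0) by lra; pose proof (Rabs_pos_lt _ H); lra).
destruct (H2 e He) as [M1 HM1]; destruct (H3 e He) as [M2 HM2].
set (M := Rmax (Rabs M1) (Rabs M2)).
assert (A1 : M1 <= M) by (unfold M; pose proof (Rle_abs M1); pose proof (Rmax_l (Rabs M1) (Rabs M2)); lra).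
assert (A2 : M2 <= M) by (unfold M; pose proof (Rle_abs M2); pose proof (Rmax_r (Rabs M1) (Rabs M2)); lra).
assert (A0 : 0 <= M) by (unfold M; pose proof (Rabs_pos M1); pose proof (Rmax_l (Rabs M1) (Rabs M2)); lra).
destruct (H1 M A0) as [pr].
specialize (HM1 M pr A1). specialize (HM2 M pr A2).
exfalso. unfold e in *.
assert (Rabs (L1 - L2) <= Rabs (RiemannInt pr - L1) + Rabs (RiemannInt pr - L2)).
{ replace (L1 - L2) with (-(RiemannInt pr - L1) + (RiemannInt pr - L2)) by ring.
  eapply Rle_trans; [apply Rabs_triang|]. rewrite Rabs_Ropp; lra. }
lra.
Qed.

Lemma integral_0_inf_eq f L : is_integral_0_inf f L -> integral_0_inf f = L.
Proof.
intro H. unfold integral_0_inf.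
apply is_integral_0_inf_unique with f; auto.
apply epsilon_spec. exists L; auto.
Qed.

Lemma hlip a b c d : Rabs (a - Rmin a b - (c - Rmin c d)) <= 2 * (Rabs (a - c) + Rabs (b - d)).
Proof.
unfold Rmin; destruct (Rle_dec a b), (Rle_dec c d);
  repeat match goal with |- context [Rabs ?z] => destruct (Rcase_abs z); [rewrite (Rabs_left z) by lra| rewrite (Rabs_right z) by lra] end; lra.
Qed.

Theorem theorem2 (sigma2 : R) (S : list R) :
  0 < sigma2 -> constellation S ->
  forall eps, 0 < eps -> exists eta, 0 < eta /\
    forall delta, 0 < delta < eta ->
      Rabs (R_AC sigma2 S delta - C_G sigma2) < eps.
Proof.
intros Hs [Hn [Hnd [Hsym Hpow]]] eps He.
set (K := 1 + lsum (map Rabs S)).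
assert (HK : forall s, In s S -> Rabs s <= K).
{ intros s Hs'. unfold K. pose proof (In_le_lsum Rabs S s Hs' Rabs_pos). lra. }
assert (HK1 : 1 <= K) by (unfold K; pose proof (lsum_map_ge0 Rabs S Rabs_pos); lra).
destruct isR_ag as [c1 Hc1].
assert (Hc10 : 0 <= c1) by (apply (isR_ge0 ag); auto; apply ag_ge0).
set (n := INR (length S)).
assert (Hlen : 0 < n) by (unfold n; destruct S; [congruence| simpl length; apply lt_0_INR; lia]).
assert (Hpow' : lsum (map (fun s => s ^ 2) S) = n).
{ fold n in Hpow. apply (Rmult_eq_reg_r (/ n)); [| apply Rinv_neq_0_compat; lra].
  rewrite Rinv_r by lra. exact Hpow. }
set (g := fun rho => 2 * K ^ 3 * sqrt rho * (sqrt rho * K + c1)).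
assert (Hg0 : forall rho, 0 <= g rho).
{ intro rho; unfold g. pose proof (sqrt_pos rho).
  apply Rmult_le_pos; [apply Rmult_le_pos; [pose proof (pow_le K 3 ltac:(lra)); lra| auto]|nra]. }
assert (Hlow : forall rho, 1 - g rho <= mmse S rho).
{ intro rho. rewrite mmse_eq. fold n. set (t := sqrt rho).
  assert (Ht : 0 <= t) by apply sqrt_pos.
  set (Bt := 2 * K ^ 3 * t * (t * K + c1)).
  assert (lsum (map (fun sj => sj ^ 2 + - Bt) S) <= lsum (map (fun sj => J S sj t) S)).
  { apply lsum_map_le. intros sj Hsj.
    pose proof (J_lower S K sj t c1 Hn Hnd Hsym HK (HK sj Hsj) Hc1 Ht). unfold Bt; lra. }
  rewrite lsum_map_plus, lsum_map_const, Hpow' in H. fold n in H.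
  unfold g; fold t; fold Bt.
  replace (1 - Bt) with ((n + n * - Bt) / n) by (field; lra).
  unfold Rdiv; apply Rmult_le_compat_r; [left; apply Rinv_0_lt_compat; auto| auto]. }
assert (Hnn : forall rho, 0 <= mmse S rho).
{ intro rho. rewrite mmse_eq. apply Rdiv_le_0_compat; auto.
  apply Rle_trans with (lsum (map (fun _ => 0) S)).
  - rewrite lsum_map_const; lra.
  - apply lsum_map_le. intros sj Hsj.
    apply (isR_ge0 (Phi S sj (sqrt rho))); [apply J_isR with K; auto|].
    intro w; apply (Phi_bound S K sj (sqrt rho) w); auto. }
assert (Hmc : forall x, continuity_pt (mmse S) x).
{ intro x.
  apply (continuity_pt_ext (mult_real_fct (/ n) (fun rho => lsum (map (fun sj => J S sj (sqrt rho)) S))));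
    [intro; rewrite mmse_eq; unfold mult_real_fct; fold n; unfold Rdiv; ring|].
  apply continuity_pt_scal. apply (cont_lsum (fun sj rho => J S sj (sqrt rho))).
  intros sj Hsj.
  apply (continuity_pt_ext (comp (J S sj) sqrt)); [intros; reflexivity|].
  apply continuity_pt_comp; [apply sqrt_cont_all| apply J_cont with K; auto]. }
set (C := 2 * K ^ 4 + 2 * K ^ 3 * c1 + 1).
assert (HC : 0 < C) by (unfold C; pose proof (pow_le K 4 ltac:(lra)); pose proof (pow_le K 3 ltac:(lra)); nra).
set (m := Rmin 1 (sigma2 * eps / C)).
assert (Hm : 0 < m) by (unfold m; apply Rmin_pos; [lra| apply Rdiv_lt_0_compat; nra]).
exists (sigma2 * m ^ 2). split; [pose proof (pow_lt m 2 Hm); nra|].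
intros delta [Hd Hdeta].
set (B := delta / sigma2).
assert (HB : 0 < B) by (unfold B; apply Rdiv_lt_0_compat; lra).
assert (HBm : B < m ^ 2).
{ unfold B. apply (Rmult_lt_reg_l sigma2); auto. replace (sigma2 * (delta / sigma2)) with delta by (field; lra). lra. }
set (F := fun rho => phi_inv sigma2 delta rho - psi_opt sigma2 S delta rho).
assert (HFc : forall x, continuity_pt F x).
{ intro x. unfold F, psi_opt.
  apply (cont_comb2 (fun a b => a - Rmin a b) (phi_inv sigma2 delta) (mmse S)).
  - apply hlip.
  - apply phi_inv_cont; auto.
  - apply Hmc. }
assert (HF0 : forall rho, 0 <= F rho).
{ intro rho. unfold F, psi_opt. pose proof (Rmin_l (phi_inv sigma2 delta rho) (mmse S rho)). lra. }
assert (HFup : forall rho, F rho <= g rho).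
{ intro rho. unfold F, psi_opt.
  assert (phi_inv sigma2 delta rho <= 1) by (rewrite phi_inv_eq; auto; apply Rmin_l).
  pose proof (Hlow rho). pose proof (Hg0 rho).
  unfold Rmin; destruct (Rle_dec (phi_inv sigma2 delta rho) (mmse S rho)); lra. }
assert (HFz : forall rho, B <= rho -> F rho = 0).
{ intros rho Hr. unfold F, psi_opt, phi_inv.
  assert (delta / (1 + sigma2) < B).
  { unfold B. unfold Rdiv. apply Rmult_lt_compat_l; auto. apply Rinv_lt_contravar; nra. }
  destruct (Rlt_dec rho (delta / (1 + sigma2))); [lra|].
  assert (delta / rho <= delta / B).
  { unfold Rdiv. apply Rmult_le_compat_l; [lra|]. apply Rinv_le_contravar; lra. }
  assert (delta / B = sigma2) by (unfold B; field; lra).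
  pose proof (Hnn rho).
  unfold Rmin; destruct (Rle_dec (delta / rho - sigma2) (mmse S rho)); lra. }
assert (Hex : forall a b, ex_RInt F a b).
{ intros. apply (ex_RInt_continuous (V:=R_CompleteNormedModule)). intros.
  apply continuity_pt_filterlim, HFc. }
set (A := RInt F 0 B).
assert (HA : is_integral_0_inf F A).
{ split.
  - intros b _. constructor. apply ex_RInt_Reals_0, Hex.
  - intros e He'. exists B. intros b pr Hb. rewrite <- RInt_Reals.
    rewrite <- (Chasles F 0 B b) by apply Hex.
    assert (RInt F B b = 0).
    { transitivity (RInt (fun _ => 0) B b).
      - apply RInt_ext. intros x Hx. rewrite Rmin_left in Hx by lra. apply HFz; lra.
      - rewrite RInt_const. change ((b - B) * 0 = 0). ring. }
    rewrite H. unfold A. rewrite Rplus_0_r, Rminus_eq_0, Rabs_R0. auto. }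
assert (HaS : a_S sigma2 S delta = A) by (apply integral_0_inf_eq; exact HA).
assert (HA0 : 0 <= A) by (apply RInt_ge0; auto; lra).
assert (HAB : A <= B * g B).
{ unfold A. replace (B * g B) with (RInt (fun _ => g B) 0 B).
  - apply RInt_le; auto; [lra| apply ex_RInt_const|].
    intros x Hx. eapply Rle_trans; [apply HFup|]. unfold g.
    pose proof (sqrt_le_1_alt x B ltac:(lra)). pose proof (sqrt_pos x).
    pose proof (pow_le K 3 ltac:(lra)).
    apply Rmult_le_compat; [| nra| | nra].
    + apply Rmult_le_pos; [lra| auto].
    + apply Rmult_le_compat_l; [lra| auto].
  - rewrite RInt_const. change ((B - 0) * g B = B * g B). ring. }
set (u := sqrt B).
assert (Hu0 : 0 <= u) by apply sqrt_pos.
assert (Huu : u * u = B) by (apply sqrt_sqrt; lra).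
assert (Hum : u < m) by (pose proof (pow_lt m 2 Hm); simpl in HBm; nra).
assert (Hm1 : m <= 1) by apply Rmin_l.
assert (Hm2 : m <= sigma2 * eps / C) by apply Rmin_r.
assert (HgB : g B <= sigma2 * eps).
{ unfold g; fold u.
  assert (E : 2 * K ^ 3 * u * (u * K + c1) = 2 * K ^ 4 * (u * u) + 2 * K ^ 3 * c1 * u) by ring.
  rewrite E.
  pose proof (pow_le K 4 ltac:(lra)). pose proof (pow_le K 3 ltac:(lra)).
  assert (u * u <= u) by nra.
  assert (2 * K ^ 4 * (u * u) <= 2 * K ^ 4 * u) by (apply Rmult_le_compat_l; lra).
  assert (2 * K ^ 4 * u + 2 * K ^ 3 * c1 * u <= C * u) by (unfold C; nra).
  assert (C * u <= C * m) by (apply Rmult_le_compat_l; lra).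
  assert (C * m <= sigma2 * eps).
  { apply Rle_trans with (C * (sigma2 * eps / C)); [apply Rmult_le_compat_l; lra| right; field; lra]. }
  lra. }
unfold R_AC. rewrite HaS.
replace (C_G sigma2 - A / (2 * delta) - C_G sigma2) with (- (A / (2 * delta))) by ring.
rewrite Rabs_Ropp, Rabs_pos_eq by (apply Rdiv_le_0_compat; lra).
assert (A / (2 * delta) <= B * g B / (2 * delta)).
{ unfold Rdiv. apply Rmult_le_compat_r; [left; apply Rinv_0_lt_compat; lra| auto]. }
assert (B * g B / (2 * delta) = g B / (2 * sigma2)) by (unfold B; field; lra).
assert (g B / (2 * sigma2) <= eps / 2).
{ apply (Rmult_le_reg_r (2 * sigma2)); [lra|].
  replace (g B / (2 * sigma2) * (2 * sigma2)) with (g B) by (field; lra). nra. }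
lra.
Qed.
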